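(* Let $H$ be a complex Hilbert space, $\varphi,\psi:[0,1]\to\mathbb{R}$ continuous, and $A\in\mathbb{B}(H)$. Then $$\Big(\int_0^1\min\{|\varphi(t)+\psi(t)|,|\varphi(t)-\psi(t)|\}\,dt\Big)\omega(A)\le\int_0^1\omega_t(\varphi,\psi;A)\,dt\le\Big(\int_0^1\max\{|\varphi(t)+\psi(t)|,|\varphi(t)-\psi(t)|\}\,dt\Big)\omega(A).$$
   Context: $S_1(H)$ is the unit sphere of $H$, $\omega(T)=\sup_{x\in S_1(H)}|\langle Tx,x\rangle|$, and $\omega_t(\varphi,\psi;A)=\sup_{x\in S_1(H)}|\langle(\varphi(t)A+\psi(t)A^* )x,x\rangle|$. *)

(* Defs.v *)
From HB Require Import structures.
From mathcomp Require Import all_boot all_order all_algebra.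
From mathcomp Require Import all_classical all_reals all_analysis.
From mathcomp Require Import complex.
Set Implicit Arguments. Unset Strict Implicit. Unset Printing Implicit Defensive.
Import Order.TTheory GRing.Theory Num.Theory.
Local Open Scope ring_scope.
Local Open Scope classical_set_scope.

Section Hilbert.
Variables (R : realType) (V : lmodType R[i]) (ip : V -> V -> R[i]).

Definition cabs (z : R[i]) : R := complex.Re `|z|.

Definition hnorm (x : V) : R := Num.sqrt (complex.Re (ip x x)).

Definition is_inner_product : Prop :=
  [/\ (forall (a : R[i]) (x y z : V), ip (a *: x + y) z = a * ip x z + ip y z),
      (forall x y : V, ip y x = (ip x y)^*),
      (forall x : V, 0 <= ip x x) &
      (forall x : V, ip x x = 0 -> x = 0)].

Definition is_complete : Prop :=
  forall u : nat -> V,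
    (forall e : R, 0 < e -> exists N : nat, forall m n : nat,
        (N <= m)%N -> (N <= n)%N -> hnorm (u m - u n) < e) ->
    exists l : V, forall e : R, 0 < e -> exists N : nat, forall n : nat,
        (N <= n)%N -> hnorm (u n - l) < e.

Definition is_hilbert : Prop := is_inner_product /\ is_complete.

Definition is_bounded_op (A : V -> V) : Prop :=
  linear A /\ exists M : R, forall x : V, hnorm (A x) <= M * hnorm x.

Definition is_adjoint (A As : V -> V) : Prop :=
  forall x y : V, ip (A x) y = ip x (As y).

Definition unit_sphere : set V := [set x | hnorm x = 1].

Definition numrad (T : V -> V) : R :=
  sup [set cabs (ip (T x) x) | x in unit_sphere].

Definition omega_t (phi psi : R -> R) (A As : V -> V) (t : R) : R :=
  numrad (fun x => (phi t)%:C%C *: A x + (psi t)%:C%C *: As x).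

End Hilbert.

Definition continuous_on01 (R : realType) (f : R -> R) : Prop :=
  forall x : R, 0 <= x <= 1 -> forall e : R, 0 < e ->
    exists2 d : R, 0 < d & forall y : R, 0 <= y <= 1 ->
      `|x - y| < d -> `|f x - f y| < e.

(* Main.v *)
Require Import Defs.
From HB Require Import structures.
From mathcomp Require Import all_boot all_order all_algebra.
From mathcomp Require Import all_classical all_reals all_analysis.
From mathcomp Require Import complex.
From mathcomp Require Import ring lra.
Import Order.TTheory GRing.Theory Num.Theory.
Import numFieldNormedType.Exports.
Local Open Scope ring_scope.
Local Open Scope classical_set_scope.
Section RealLemmas.
Variable R : realType.
Implicit Types a b u v p q c : R.

Definition FF a b u v := Num.sqrt (((a + b) * u) ^+ 2 + ((a - b) * v) ^+ 2).
Definition NN u v := Num.sqrt (u ^+ 2 + v ^+ 2).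

Lemma NN_ge0 u v : 0 <= NN u v. Proof. exact: sqrtr_ge0. Qed.

Lemma sqrtMN c u v : 0 <= c -> c * NN u v = Num.sqrt (c ^+ 2 * (u ^+ 2 + v ^+ 2)).
Proof. by move=> c0; rewrite sqrtrM ?sqr_ge0 // sqrtr_sqr ger0_norm. Qed.

Lemma sqr_le c p : 0 <= c -> c <= `|p| -> c ^+ 2 <= p ^+ 2.
Proof.
move=> c0 cp; rewrite -(real_normK (num_real p)).
by rewrite ler_pXn2r // ?nnegrE ?normr_ge0.
Qed.

Lemma sqr_ge c p : `|p| <= c -> p ^+ 2 <= c ^+ 2.
Proof.
move=> cp; have c0 : 0 <= c by apply: le_trans cp.
rewrite -(real_normK (num_real p)).
by rewrite ler_pXn2r // ?nnegrE ?normr_ge0.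
Qed.

Lemma FF_bounds a b u v :
  Num.min `|a + b| `|a - b| * NN u v <= FF a b u v /\
  FF a b u v <= Num.max `|a + b| `|a - b| * NN u v.
Proof.
set m := Num.min _ _; set M := Num.max _ _.
have m0 : 0 <= m by rewrite /m le_min !normr_ge0.
have M0 : 0 <= M by rewrite /M le_max normr_ge0.
have hu := sqr_ge0 u; have hv := sqr_ge0 v.
have h1 : m ^+ 2 <= (a + b) ^+ 2 by apply: sqr_le => //; rewrite /m ge_min lexx.
have h2 : m ^+ 2 <= (a - b) ^+ 2 by apply: sqr_le => //; rewrite /m ge_min lexx orbT.
have h3 : (a + b) ^+ 2 <= M ^+ 2 by apply: sqr_ge => //; rewrite /M le_max lexx.
have h4 : (a - b) ^+ 2 <= M ^+ 2 by apply: sqr_ge => //; rewrite /M le_max lexx orbT.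
rewrite /FF !sqrtMN //; split; rewrite ler_sqrt ?mulrDr ?exprMn.
- by apply: lerD; apply: ler_wpM2r.
- by rewrite addr_ge0 // mulr_ge0 // sqr_ge0.
- by apply: lerD; apply: ler_wpM2r.
- by rewrite addr_ge0 // mulr_ge0 // sqr_ge0.
Qed.

Lemma FF_tri a b a' b' u v :
  FF a b u v <= FF a' b' u v + (`|a - a'| + `|b - b'|) * NN u v.
Proof.
have -> : FF a b u v = Normc.normc (((a + b) * u) +i* ((a - b) * v))%C by [].
have E : (((a + b) * u) +i* ((a - b) * v))%C =
   (((a' + b') * u) +i* ((a' - b') * v))%C +
   ((((a - a') + (b - b')) * u) +i* (((a - a') - (b - b')) * v))%C.
  by apply/eqP; rewrite eq_complex /=; apply/andP; split; apply/eqP; ring.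
rewrite E; apply: le_trans (le_normcD _ _) _.
apply: lerD => //.
have [_ +] := FF_bounds (a - a') (b - b') u v.
move=> /le_trans; apply; apply: ler_wpM2r; first exact: NN_ge0.
by rewrite ge_max ler_normD ler_normB.
Qed.

Lemma minmax_lip p q p' q' :
  `|Num.min p q - Num.min p' q'| <= `|p - p'| + `|q - q'| /\
  `|Num.max p q - Num.max p' q'| <= `|p - p'| + `|q - q'|.
Proof.
have h1 := ler_norm (p - p'); have h2 := ler_norm (- (p - p')).
have h3 := ler_norm (q - q'); have h4 := ler_norm (- (q - q')).
rewrite normrN in h2; rewrite normrN in h4.

split; case: (ltP p q) => h5; case: (ltP p' q') => h6;
  rewrite ler_norml; apply/andP; split; lra.
Qed.

End RealLemmas.
Arguments FF {R}. Arguments NN {R}. Arguments FF_bounds {R}. Arguments FF_tri {R}. Arguments minmax_lip {R}. Arguments NN_ge0 {R}.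
Section SupLemmas.
Variables (R : realType) (T : Type) (U : set T) (g : T -> R).

Lemma sup_le K : (forall x, U x -> g x <= K) -> 0 <= K -> sup [set g x | x in U] <= K.
Proof.
move=> H K0; have [[x0 Ux0]|nU] := pselect (exists x, U x).
  apply: ge_sup; first by exists (g x0), x0.
  by move=> y [x Ux <-]; exact: H.
have -> : [set g x | x in U] = set0.
  by apply/seteqP; split => y //= [x Ux _]; exfalso; apply: nU; exists x.
by rewrite sup0.
Qed.

Lemma le_sup {x} : has_ubound [set g x | x in U] -> U x -> g x <= sup [set g x | x in U].
Proof. by move=> hb Ux; apply: ub_le_sup => //; exists x. Qed.

Lemma sup_ge0 : (forall x, U x -> 0 <= g x) -> has_ubound [set g x | x in U] ->
  0 <= sup [set g x | x in U].
Proof.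
move=> H hb; have [[x0 Ux0]|nU] := pselect (exists x, U x).
  by apply: le_trans (H _ Ux0) (le_sup hb Ux0 : g x0 <= _).
have -> : [set g x | x in U] = set0.
  by apply/seteqP; split => y //= [x Ux _]; exfalso; apply: nU; exists x.
by rewrite sup0.
Qed.
End SupLemmas.
Arguments le_sup {R T U g x}.
Lemma cabsE (R : realType) (w : R[i]) : cabs w = Num.sqrt (complex.Re w ^+ 2 + complex.Im w ^+ 2).
Proof. by rewrite /cabs normc_def. Qed.
Lemma Re_conjM (R : realType) (w : R[i]) :
  complex.Re (Num.conj w * w) = complex.Re w ^+ 2 + complex.Im w ^+ 2.
Proof. by case: w => u v /=; ring. Qed.

Section Hilb.
Variables (R : realType) (V : lmodType R[i]) (ip : V -> V -> R[i]).
Hypothesis hip : is_inner_product ip.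

Lemma ipDZl (a : R[i]) x y z : ip (a *: x + y) z = a * ip x z + ip y z.
Proof. by case: hip. Qed.
Lemma ipC x y : ip y x = Num.conj (ip x y). Proof. by case: hip. Qed.
Lemma ip_ge0 x : 0 <= ip x x. Proof. by case: hip. Qed.

Lemma ip0l z : ip 0 z = 0.
Proof.
have e := ipDZl 1 0 0 z; rewrite scaler0 addr0 mul1r in e.
by move/(congr1 (fun w => w - ip 0 z)): e; rewrite addrK subrr => <-.
Qed.

Lemma ipZl a x z : ip (a *: x) z = a * ip x z.
Proof. by have := ipDZl a x 0 z; rewrite addr0 ip0l addr0. Qed.

Lemma ipDl x y z : ip (x + y) z = ip x z + ip y z.
Proof. by have := ipDZl 1 x y z; rewrite scale1r mul1r. Qed.

Lemma ipZr a x z : ip z (a *: x) = Num.conj a * ip z x.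
Proof. by rewrite ipC ipZl rmorphM /= -ipC. Qed.

Lemma ipDr x y z : ip z (x + y) = ip z x + ip z y.
Proof. by rewrite ipC ipDl rmorphD /= -!ipC. Qed.

Lemma unit_ip {x} : unit_sphere ip x -> ip x x = 1.
Proof.
rewrite /unit_sphere /hnorm /= => h.
have g := ip_ge0 x; have Im0 := ger0_Im g.
have Re0 : 0 <= complex.Re (ip x x) by move: g; rewrite lecE => /andP[_].
have Re1 : complex.Re (ip x x) = 1 by rewrite -(sqr_sqrtr Re0) h expr1n.
by move: Im0 Re1; case: (ip x x) => u v /= -> ->.
Qed.

Variables (A As : V -> V).
Hypothesis hA : is_bounded_op ip A.
Hypothesis hadj : is_adjoint ip A As.

Lemma za_bound : exists M, forall x, unit_sphere ip x -> cabs (ip (A x) x) <= M.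
Proof.
case: hA => _ [M hM]; exists M => x ux.
have x1 := unit_ip ux.
have hn : hnorm ip (A x) <= M by have := hM x; rewrite (ux : hnorm ip x = 1) mulr1.
set y := A x in hn *; set l := ip y x.
have key : ip y y - Num.conj l * l = ip (y + (-l) *: x) (y + (-l) *: x).
  rewrite ipDl !ipDr !ipZl !ipZr x1 -/l (ipC y x) -/l rmorphN /=; ring.
have := ip_ge0 (y + (-l) *: x); rewrite -key subr_ge0 lecE => /andP[_].
rewrite Re_conjM => H.
rewrite cabsE; apply: le_trans hn; rewrite /hnorm ler_sqrt //.
by apply: le_trans H; rewrite addr_ge0 // sqr_ge0.
Qed.



Lemma cabs_ge0 (w : R[i]) : 0 <= cabs w.
Proof. by rewrite cabsE sqrtr_ge0. Qed.

Lemma hubA : has_ubound [set cabs (ip (A x) x) | x in unit_sphere ip].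
Proof. by have [M HM] := za_bound; exists M => y [x ux <-]; apply: HM. Qed.

Lemma zA_le x : unit_sphere ip x -> cabs (ip (A x) x) <= numrad ip A.
Proof. by move=> ux; rewrite /numrad; exact: (le_sup hubA ux). Qed.

Lemma numradA_ge0 : 0 <= numrad ip A.
Proof. by apply: sup_ge0 => //; [move=> x _; exact: cabs_ge0 | exact: hubA]. Qed.

Definition Tab (a b : R) := fun x => (a)%:C%C *: A x + (b)%:C%C *: As x.

Lemma ipT a b x : ip (Tab a b x) x =
  a%:C%C * ip (A x) x + b%:C%C * Num.conj (ip (A x) x).
Proof. by rewrite /Tab ipDZl ipZl (ipC x (As x)) -hadj. Qed.

Lemma cabsT a b x : cabs (ip (Tab a b x) x) =
  FF a b (complex.Re (ip (A x) x)) (complex.Im (ip (A x) x)).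
Proof.
rewrite ipT cabsE; case: (ip (A x) x) => u v; rewrite /FF /=.
by congr Num.sqrt; ring.
Qed.

Lemma cabsA x : cabs (ip (A x) x) =
  NN (complex.Re (ip (A x) x)) (complex.Im (ip (A x) x)).
Proof. by rewrite cabsE. Qed.

Lemma T_pt_upper a b x : unit_sphere ip x ->
  cabs (ip (Tab a b x) x) <= Num.max `|a + b| `|a - b| * numrad ip A.
Proof.
move=> ux; rewrite cabsT.
have [_ h] := FF_bounds a b (complex.Re (ip (A x) x)) (complex.Im (ip (A x) x)).
apply: le_trans h _; apply: ler_wpM2l; first by rewrite le_max normr_ge0.
by rewrite -cabsA; exact: zA_le.
Qed.

Lemma hubT a b : has_ubound [set cabs (ip (Tab a b x) x) | x in unit_sphere ip].
Proof. by exists (Num.max `|a + b| `|a - b| * numrad ip A) => y [x ux <-]; exact: T_pt_upper. Qed.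

Lemma numT_ge0 a b : 0 <= numrad ip (Tab a b).
Proof. by apply: sup_ge0; [move=> x _; exact: cabs_ge0 | exact: hubT]. Qed.

Lemma T_upper a b : numrad ip (Tab a b) <= Num.max `|a + b| `|a - b| * numrad ip A.
Proof.
apply: sup_le; first by move=> x ux; exact: T_pt_upper.
by rewrite mulr_ge0 ?numradA_ge0 // le_max normr_ge0.
Qed.

Lemma T_lower a b : Num.min `|a + b| `|a - b| * numrad ip A <= numrad ip (Tab a b).
Proof.
set m := Num.min _ _.
have m0 : 0 <= m by rewrite /m le_min !normr_ge0.
have [->|mn0] := eqVneq m 0; first by rewrite mul0r numT_ge0.
have mpos : 0 < m by rewrite lt_def mn0 m0.
rewrite mulrC -ler_pdivlMr //.
apply: sup_le; last by rewrite divr_ge0 // ?numT_ge0 // ltW.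
move=> x ux; rewrite ler_pdivlMr //.
apply: le_trans (le_sup (hubT a b) ux).
rewrite cabsT cabsA mulrC.
exact: (FF_bounds a b _ _).1.
Qed.

Lemma T_lip a b a' b' : numrad ip (Tab a b) <=
  numrad ip (Tab a' b') + (`|a - a'| + `|b - b'|) * numrad ip A.
Proof.
apply: sup_le; last first.
  by rewrite addr_ge0 ?numT_ge0 // mulr_ge0 ?numradA_ge0 // addr_ge0.
move=> x ux; rewrite cabsT.
apply: le_trans (FF_tri a b a' b' _ _) _.
apply: lerD.
  by rewrite -cabsT; exact: (le_sup (hubT a' b') ux).
apply: ler_wpM2l; first by rewrite addr_ge0.
by rewrite -cabsA; exact: zA_le.
Qed.

Lemma T_lip_abs a b a' b' : `|numrad ip (Tab a b) - numrad ip (Tab a' b')| <=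
  numrad ip A * (`|a - a'| + `|b - b'|).
Proof.
have h1 := T_lip a b a' b'; have h2 := T_lip a' b' a b.
rewrite (distrC a') (distrC b') in h2.
rewrite mulrC ler_norml; apply/andP; split; lra.
Qed.

End Hilb.
Lemma cont01_within (R : realType) (f : R -> R) :
  continuous_on01 f -> {within `[0%R, 1%R], continuous f}.
Proof.
move=> cf; apply: (proj2 (@subspace_continuousP _ _ _ f)) => x /= x01.
apply/cvgrPdist_lt => e e0.
have x01' : 0 <= x <= 1 by move: x01; rewrite in_itv.
have [d d0 H] := cf x x01' e e0.
rewrite /within; apply/nbhs_ballP; exists d => //= y bxy y01.
apply: H; first by move: y01; rewrite in_itv.
by move: bxy; rewrite /ball /=.
Qed.

Lemma cont01_int (R : realType) (f : R -> R) :
  continuous_on01 f -> (@lebesgue_measure R).-integrable `[0%R, 1%R] (EFin \o f).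
Proof.
move=> cf; apply: continuous_compact_integrable; first exact: segment_compact.
exact: cont01_within.
Qed.

Lemma cont_lip (R : realType) (phi psi : R -> R) (G : R -> R -> R) (L : R) :
  0 <= L ->
  (forall a b a' b', `|G a b - G a' b'| <= L * (`|a - a'| + `|b - b'|)) ->
  continuous_on01 phi -> continuous_on01 psi ->
  continuous_on01 (fun t => G (phi t) (psi t)).
Proof.
move=> L0 HG cphi cpsi x x01 e e0.
have L1 : 0 < L + 1 by lra.
set e' := e / (2 * (L + 1)).
have e'0 : 0 < e' by rewrite /e' divr_gt0 // mulr_gt0.
have [d1 d10 H1] := cphi x x01 e' e'0.
have [d2 d20 H2] := cpsi x x01 e' e'0.
exists (Num.min d1 d2); first by rewrite lt_min d10 d20.
move=> y y01; rewrite lt_min => /andP[xy1 xy2].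
have h1 := H1 y y01 xy1; have h2 := H2 y y01 xy2.
apply: le_lt_trans (HG _ _ _ _) _.
apply: (@le_lt_trans _ _ ((L + 1) * (`|phi x - phi y| + `|psi x - psi y|))).
  by apply: ler_wpM2r; [rewrite addr_ge0 | lra].
have -> : e = (L + 1) * (e' + e').
  by rewrite /e'; field; rewrite gt_eqF.
by rewrite ltr_pM2l // ltrD.
Qed.

Lemma Gmin_lip (R : realType) (a b a' b' : R) :
  `|(Num.min `|a + b| `|a - b|) - (Num.min `|a' + b'| `|a' - b'|)| <=
    2 * (`|a - a'| + `|b - b'|).
Proof.
have [h _] := minmax_lip `|a + b| `|a - b| `|a' + b'| `|a' - b'|.
have g1 := ler_dist_dist (a + b) (a' + b').
have g2 := ler_dist_dist (a - b) (a' - b').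
rewrite (_ : a + b - (a' + b') = (a - a') + (b - b')) in g1; last by ring.
rewrite (_ : a - b - (a' - b') = (a - a') - (b - b')) in g2; last by ring.
have g3 := ler_normD (a - a') (b - b').
have g4 := ler_normB (a - a') (b - b').
lra.
Qed.

Lemma Gmax_lip (R : realType) (a b a' b' : R) :
  `|(Num.max `|a + b| `|a - b|) - (Num.max `|a' + b'| `|a' - b'|)| <=
    2 * (`|a - a'| + `|b - b'|).
Proof.
have [_ h] := minmax_lip `|a + b| `|a - b| `|a' + b'| `|a' - b'|.
have g1 := ler_dist_dist (a + b) (a' + b').
have g2 := ler_dist_dist (a - b) (a' - b').
rewrite (_ : a + b - (a' + b') = (a - a') + (b - b')) in g1; last by ring.
rewrite (_ : a - b - (a' - b') = (a - a') - (b - b')) in g2; last by ring.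
have g3 := ler_normD (a - a') (b - b').
have g4 := ler_normB (a - a') (b - b').
lra.
Qed.

Lemma lip_scale (R : realType) (G : R -> R -> R) (c : R) :
  0 <= c ->
  (forall a b a' b', `|G a b - G a' b'| <= 2 * (`|a - a'| + `|b - b'|)) ->
  forall a b a' b', `|G a b * c - G a' b' * c| <= (2 * c) * (`|a - a'| + `|b - b'|).
Proof.
move=> c0 HG a b a' b'.
rewrite -mulrBl normrM (ger0_norm c0) [2 * c * _]mulrAC.
by apply: ler_wpM2r => //; exact: HG.
Qed.

Theorem corollary4p4 (R : realType) (V : lmodType R[i]) (ip : V -> V -> R[i])
  (phi psi : R -> R) (A As : V -> V) :
  is_hilbert ip ->
  continuous_on01 phi ->
  continuous_on01 psi ->
  is_bounded_op ip A ->
  is_adjoint ip A As ->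
  (Rintegral lebesgue_measure `[0%R, 1%R]
     (fun t => Num.min `|phi t + psi t| `|phi t - psi t|)) * numrad ip A
  <= Rintegral lebesgue_measure `[0%R, 1%R] (omega_t ip phi psi A As)
  /\
  Rintegral lebesgue_measure `[0%R, 1%R] (omega_t ip phi psi A As)
  <= (Rintegral lebesgue_measure `[0%R, 1%R]
     (fun t => Num.max `|phi t + psi t| `|phi t - psi t|)) * numrad ip A.
Proof.
move=> [hip _] cphi cpsi hA hadj.
have c0 : 0 <= numrad ip A by apply: numradA_ge0.
set c := numrad ip A in c0 *.
have mD : measurable (`[0%R, 1%R] : set R) by exact: measurable_itv.
have Imin : (@lebesgue_measure R).-integrable `[0%R, 1%R]
    (EFin \o (fun t => Num.min `|phi t + psi t| `|phi t - psi t|)).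
  apply: cont01_int; apply: (@cont_lip R phi psi (fun a b => Num.min `|a + b| `|a - b|) (2)) => //.
  exact: Gmin_lip.
have Imax : (@lebesgue_measure R).-integrable `[0%R, 1%R]
    (EFin \o (fun t => Num.max `|phi t + psi t| `|phi t - psi t|)).
  apply: cont01_int; apply: (@cont_lip R phi psi (fun a b => Num.max `|a + b| `|a - b|) (2)) => //.
  exact: Gmax_lip.
have Imin' : (@lebesgue_measure R).-integrable `[0%R, 1%R]
    (EFin \o (fun t => Num.min `|phi t + psi t| `|phi t - psi t| * c)).
  apply: cont01_int.
  apply: (@cont_lip R phi psi (fun a b => Num.min `|a + b| `|a - b| * c) (2 * c)) => //.
    by rewrite mulr_ge0.
  by apply: lip_scale => //; exact: Gmin_lip.
have Imax' : (@lebesgue_measure R).-integrable `[0%R, 1%R]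
    (EFin \o (fun t => Num.max `|phi t + psi t| `|phi t - psi t| * c)).
  apply: cont01_int.
  apply: (@cont_lip R phi psi (fun a b => Num.max `|a + b| `|a - b| * c) (2 * c)) => //.
    by rewrite mulr_ge0.
  by apply: lip_scale => //; exact: Gmax_lip.
have Iom : (@lebesgue_measure R).-integrable `[0%R, 1%R]
    (EFin \o (omega_t ip phi psi A As)).
  apply: cont01_int.
  apply: (@cont_lip R phi psi (fun a b => numrad ip (@Tab _ _ A As a b)) (c)) => //.
  by move=> a b a' b'; apply: T_lip_abs.
split.
- rewrite -RintegralZr //; apply: le_Rintegral => // t _.
  by apply: T_lower.
- rewrite -RintegralZr //; apply: le_Rintegral => // t _.
  by apply: T_upper.
Qed.
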